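(* Let $\mathcal S,\mathcal P\subseteq\mathcal G$ be group properties with $\mathcal P\subseteq\mathcal S$. If for every $G\in\mathcal S$ there is some $H\in\mathcal P$ such that $\overline G$ can be embedded into $\overline H$, then $\mathcal P$ is dense in $\mathcal S$.
   Context: Let $\mathbb N=\{1,2,3,\dots\}$. Equip $\mathbb N^{\mathbb N\times\mathbb N}$ with the product topology of the discrete topology on $\mathbb N$. Let $\mathcal G$ be the subspace consisting of those $A\in\mathbb N^{\mathbb N\times\mathbb N}$ that are the multiplication table of a group on the underlying set $\mathbb N$ whose identity element is $1$. For $G\in\mathcal G$, $\overline G$ denotes the group on $\mathbb N$ with multiplication table $G$. A group property is a subset $\mathcal P\subseteq\mathcal G$ invariant under isomorphism: if $G\in\mathcal G$, $H\in\mathcal P$ and $\overline G\cong\overline H$ then $G\in\mathcal P$. *)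

(* Defs.v *)
(* N = {1,2,3,...} is represented by Rocq's [positive],
   whose least element is 1%positive. *)
From Stdlib Require Import PArith List.
Import ListNotations.

(* Points of N^(N x N): (curried) functions N -> N -> N. *)
Definition table := positive -> positive -> positive.

Definition is_group_table (A : table) : Prop :=
  (forall x y z, A (A x y) z = A x (A y z)) /\
  (forall x, A 1%positive x = x /\ A x 1%positive = x) /\
  (forall x, exists y, A x y = 1%positive /\ A y x = 1%positive).

Definition G_space : table -> Prop := is_group_table.

Definition is_hom (A B : table) (f : positive -> positive) : Prop :=
  forall x y, f (A x y) = B (f x) (f y).

Definition group_iso (A B : table) : Prop :=
  exists f : positive -> positive,
    is_hom A B f /\ (forall x y, f x = f y -> x = y) /\ (forall y, exists x, f x = y).

Definition group_embeds (A B : table) : Prop :=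
  exists f : positive -> positive,
    is_hom A B f /\ (forall x y, f x = f y -> x = y).

Definition group_property (P : table -> Prop) : Prop :=
  (forall A, P A -> G_space A) /\
  (forall A B, G_space A -> P B -> group_iso A B -> P A).

(* Basic open neighbourhoods of A in the product of discrete topologies:
   the tables agreeing with A on a finite set F of coordinates. *)
Definition agree_on (F : list (positive * positive)) (A B : table) : Prop :=
  forall p, In p F -> B (fst p) (snd p) = A (fst p) (snd p).

(* P is dense in S: every point of S lies in the closure of P, i.e. every
   basic open neighbourhood of a point of S meets P. *)
Definition dense_in (P S : table -> Prop) : Prop :=
  forall A, S A -> forall F : list (positive * positive),
    exists B, P B /\ agree_on F A B.

(* Main.v *)
Require Import Defs.
From Stdlib Require Import PArith List.
Import ListNotations.

Definition swp (c x u : positive) : positive :=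
  if Pos.eq_dec u c then x else if Pos.eq_dec u x then c else u.

Lemma swp_inv c x u : swp c x (swp c x u) = u.
Proof.
  unfold swp; repeat (destruct Pos.eq_dec; subst; try congruence).
Qed.

Lemma perm_ext (f : positive -> positive) (Hf : forall x y, f x = f y -> x = y)
  (X : list positive) :
  exists pi rho : positive -> positive,
    (forall u, rho (pi u) = u) /\ (forall u, pi (rho u) = u) /\
    (forall x, In x X -> pi (f x) = x).
Proof.
  induction X as [|x X IH].
  - exists (fun u => u), (fun u => u); simpl; tauto.
  - destruct IH as (pi & rho & H1 & H2 & H3).
    destruct (in_dec Pos.eq_dec x X) as [Hin|Hin].
    + exists pi, rho; repeat split; auto.
      intros y [<-|Hy]; auto.
    + set (c := pi (f x)).
      exists (fun u => swp c x (pi u)), (fun u => rho (swp c x u)).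
      repeat split.
      * intro u; rewrite swp_inv; auto.
      * intro u; rewrite H2, swp_inv; auto.
      * intros y [<-|Hy].
        -- unfold swp; fold c; destruct Pos.eq_dec; congruence.
        -- rewrite (H3 y Hy). unfold swp.
           destruct (Pos.eq_dec y c) as [e|e].
           ++ exfalso. unfold c in e. rewrite <- (H3 y Hy) in e.
              apply (f_equal rho) in e. rewrite !H1 in e.
              apply Hf in e. subst; contradiction.
           ++ destruct (Pos.eq_dec y x); [subst; contradiction|auto].
Qed.

Theorem lemma4p3 (S P : table -> Prop) :
  group_property S -> group_property P ->
  (forall A, P A -> S A) ->
  (forall G, S G -> exists H, P H /\ group_embeds G H) ->
  dense_in P S.
Proof.
  intros [HS1 HS2] [HP1 HP2] HPS Hemb A HA F.
  destruct (Hemb A HA) as (H & HPH & f & Hhom & Hinj).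
  destruct (HS1 A HA) as (Aas & Aid & Ainv).
  destruct (HP1 H HPH) as (Has & Hid & Hinv).
  assert (Hf1 : f 1%positive = 1%positive).
  { assert (e : f 1%positive = H (f 1%positive) (f 1%positive)).
    { rewrite <- Hhom. f_equal. symmetry; apply Aid. }
    destruct (Hinv (f 1%positive)) as (w & _ & Hw).
    rewrite <- Hw. rewrite e at 2. rewrite <- Has, Hw. symmetry; apply Hid. }
  destruct (perm_ext f Hinj
     (1%positive :: flat_map (fun p => [fst p; snd p; A (fst p) (snd p)]) F))
    as (pi & rho & H1 & H2 & H3).
  assert (pi1 : pi 1%positive = 1%positive).
  { rewrite <- Hf1 at 1. apply H3; left; auto. }
  assert (rho1 : rho 1%positive = 1%positive).
  { rewrite <- pi1, H1; auto. }
  exists (fun u v => pi (H (rho u) (rho v))).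
  split.
  - apply (HP2 _ H); auto.
    + unfold G_space, is_group_table; repeat split.
      * intros x y z. rewrite !H1, Has; auto.
      * rewrite rho1. rewrite (proj1 (Hid _)); auto.
      * rewrite rho1. rewrite (proj2 (Hid _)); auto.
      * intro x. destruct (Hinv (rho x)) as (y & e1 & e2).
        exists (pi y). rewrite H1, e1, e2, pi1; auto.
    + exists rho. repeat split.
      * unfold is_hom; intros x y. rewrite H1; auto.
      * intros x y e. rewrite <- (H2 x), <- (H2 y), e; auto.
      * intro y. exists (pi y); auto.
  - intros [x y] Hin. simpl.
    assert (Hx : In x (1%positive :: flat_map (fun p => [fst p; snd p; A (fst p) (snd p)]) F)).
    { right. apply in_flat_map. exists (x, y); simpl; auto. }
    assert (Hy : In y (1%positive :: flat_map (fun p => [fst p; snd p; A (fst p) (snd p)]) F)).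
    { right. apply in_flat_map. exists (x, y); simpl; auto. }
    assert (Hxy : In (A x y) (1%positive :: flat_map (fun p => [fst p; snd p; A (fst p) (snd p)]) F)).
    { right. apply in_flat_map. exists (x, y); simpl; auto. }
    rewrite <- (H3 x Hx), <- (H3 y Hy), !H1, <- Hhom, (H3 x Hx), (H3 y Hy).
    apply H3; auto.
Qed.
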